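(* Let $V$ be a vertex algebra over a field $k$ of characteristic $0$ with translation operator $T$, and let $f\in k((x))$. Then for all $a,b\in V$, $$a_{(f(x))}b+b_{(f(-x))}a=\sum_{j\in\mathbb{Z}_+}\frac{(-1)^j}{(j+1)!}\,T^{j+1}\bigl(a_{(x^{j+1}f(x))}b\bigr).$$
   Context: For a vertex algebra $V$ with $n$-th products $a(n)b$ (so that $a(n)b=0$ for $n\gg0$), write $a(z)b=\sum_{n\in\mathbb{Z}}a(n)b\,z^{-n-1}\in V((z))$. For a Laurent series $f\in k((x))$ the $f$-product is $a_{(f)}b=\operatorname{res}_z f(z)a(z)b$, the coefficient of $z^{-1}$ in $f(z)a(z)b$; notation such as $a_{(x^{j}f(x))}b$ means the $f$-product with the series $x^jf(x)$. The translation operator is $Ta=a(-2)\mathbf{1}$. The sum on the right is finite. *)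

(* Defs.v *)
From HB Require Import structures.
From mathcomp Require Import all_boot all_order all_algebra.
Set Implicit Arguments. Unset Strict Implicit. Unset Printing Implicit Defensive.
Import Order.TTheory GRing.Theory Num.Theory.
Local Open Scope ring_scope.

Definition binz (k : fieldType) (m : int) (j : nat) : k :=
  (\prod_(i < j) (m - i%:Z)%:~R) / (j`!)%:R.

(* Borcherds' sums are finite by truncation;
   we state them as equality of all sufficiently long partial sums. *)
Record vertex_algebra (k : fieldType) (V : lmodType k) := VertexAlgebra {
  nprod : int -> V -> V -> V;
  vac : V;
  vtrunc : V -> V -> int;
  nprod_linl : forall (n : int) (c : k) (a a' b : V),
      nprod n (c *: a + a') b = c *: nprod n a b + nprod n a' b;
  nprod_linr : forall (n : int) (c : k) (a b b' : V),
      nprod n a (c *: b + b') = c *: nprod n a b + nprod n a b';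
  vtruncP : forall (a b : V) (n : int), vtrunc a b <= n -> nprod n a b = 0;
  vac_left : forall (n : int) (a : V),
      nprod n vac a = if n == (-1)%Z then a else 0;
  vac_right_m1 : forall a : V, nprod (-1)%Z a vac = a;
  vac_right_ge0 : forall (n : int) (a : V), 0 <= n -> nprod n a vac = 0;
  borcherds : forall (l m n : int) (a b c : V), exists N : nat,
      forall M : nat, (N <= M)%N ->
      \sum_(j < M) binz k m j *: nprod (m + n - j%:Z) (nprod (l + j%:Z) a b) c
      = \sum_(j < M) (((-1) ^+ j * binz k l j) *:
            (nprod (m + l - j%:Z) a (nprod (n + j%:Z) b c)
             - ((-1) ^ l) *: nprod (n + l - j%:Z) b (nprod (m + j%:Z) a c)))
}.

Definition transl (k : fieldType) (V : lmodType k) (VA : vertex_algebra V)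
  (a : V) : V := nprod VA (-2)%Z a (vac VA).

Record laurent (k : fieldType) := Laurent {
  llow : int;
  lcoef : int -> k;
  lcoefP : forall n : int, n < llow -> lcoef n = 0
}.

Lemma lneg_subproof (k : fieldType) (f : laurent k) (n : int) :
  n < llow f -> (-1) ^ n * lcoef f n = 0.
Proof. by move=> Hn; rewrite (lcoefP Hn) mulr0. Qed.
Definition laurent_neg (k : fieldType) (f : laurent k) : laurent k :=
  @Laurent k (llow f) (fun n => (-1) ^ n * lcoef f n) (@lneg_subproof k f).

Lemma lshift_subproof (k : fieldType) (j : nat) (f : laurent k) (n : int) :
  n < llow f + j%:Z -> lcoef f (n - j%:Z) = 0.
Proof. by move=> Hn; apply: lcoefP; rewrite ltrBlDr. Qed.
Definition laurent_xshift (k : fieldType) (j : nat) (f : laurent k) : laurent k :=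
  @Laurent k (llow f + j%:Z) (fun n => lcoef f (n - j%:Z)) (@lshift_subproof k j f).

(* f-product  a_(f) b = res_z f(z) a(z) b = sum_n f_n a(n)b  (finite sum:
   f_n = 0 for n < llow f, a(n)b = 0 for n >= vtrunc a b). *)
Definition f_product (k : fieldType) (V : lmodType k) (VA : vertex_algebra V)
  (f : laurent k) (a b : V) : V :=
  \sum_(i < `|vtrunc VA a b - llow f|%N)
     lcoef f (llow f + i%:Z) *: nprod VA (llow f + i%:Z) a b.

(* Main.v *)
Require Import Defs.
From HB Require Import structures.
From mathcomp Require Import all_boot all_order all_algebra.
From mathcomp Require Import zify ring.
Import Order.TTheory GRing.Theory Num.Theory.
Local Open Scope ring_scope.
Set Implicit Arguments. Unset Strict Implicit.

Lemma sum_single (W : zmodType) M p (F : nat -> W) : (p < M)%N ->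
  (forall j, j != p -> F j = 0) -> \sum_(j < M) F j = F p.
Proof.
move=> pM H; rewrite (bigD1 (Ordinal pM)) //= big1 ?addr0 // => j /eqP jp.
apply: H; apply/eqP => E; apply: jp; apply: val_inj => /=; exact: E.
Qed.

Lemma sum_trunc (W : zmodType) K0 K (F : nat -> W) : (K0 <= K)%N ->
  (forall i, (K0 <= i)%N -> F i = 0) -> \sum_(i < K) F i = \sum_(i < K0) F i.
Proof.
move=> HK H; rewrite -(subnKC HK) big_split_ord /= [X in _ + X]big1 ?addr0 // => i _.
by apply: H; rewrite leq_addr.
Qed.

Lemma sum_tr (W : zmodType) K0 K (HK : (K0 <= K)%N) (F : 'I_K -> W) :
  (forall i : 'I_K, (K0 <= i)%N -> F i = 0) ->
  \sum_(i < K) F i = \sum_(i < K0) F (widen_ord HK i).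
Proof.
move=> H; rewrite (bigID (fun i : 'I_K => (i < K0)%N)) /=.
rewrite [X in _ + X]big1 ?addr0 ?big_ord_narrow // => i; rewrite -leqNgt; exact: H.
Qed.

Lemma np_r0 (k : fieldType) (V : lmodType k) (VA : vertex_algebra V) n a :
  nprod VA n a 0 = 0.
Proof.
have := nprod_linr VA n (-1) a 0 0.
by rewrite scaler0 addr0 scaleN1r addNr.
Qed.

Lemma np_l0 (k : fieldType) (V : lmodType k) (VA : vertex_algebra V) n b :
  nprod VA n 0 b = 0.
Proof.
have := nprod_linl VA n (-1) 0 0 b.
by rewrite scaler0 addr0 scaleN1r addNr.
Qed.

Lemma np_lD (k : fieldType) (V : lmodType k) (VA : vertex_algebra V) n a a' b :
  nprod VA n (a + a') b = nprod VA n a b + nprod VA n a' b.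
Proof. by have := nprod_linl VA n 1 a a' b; rewrite !scale1r. Qed.

Lemma np_lZ (k : fieldType) (V : lmodType k) (VA : vertex_algebra V) n c a b :
  nprod VA n (c *: a) b = c *: nprod VA n a b.
Proof. by have := nprod_linl VA n c a 0 b; rewrite !addr0 np_l0 addr0. Qed.

Lemma iterT_lin (k : fieldType) (V : lmodType k) (VA : vertex_algebra V) p c x y :
  iter p (transl VA) (c *: x + y) = c *: iter p (transl VA) x + iter p (transl VA) y.
Proof.
elim: p => [|p IH] //=.
by rewrite IH /transl np_lD np_lZ.
Qed.

Lemma iterT0 (k : fieldType) (V : lmodType k) (VA : vertex_algebra V) p :
  iter p (transl VA) 0 = 0.
Proof.
have := iterT_lin VA p 1 0 0; rewrite !scale1r addr0 => H.
by apply: (@addrI _ (iter p (transl VA) 0)); rewrite addr0 -H.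
Qed.

Lemma iterTZ (k : fieldType) (V : lmodType k) (VA : vertex_algebra V) p c x :
  iter p (transl VA) (c *: x) = c *: iter p (transl VA) x.
Proof. by have := iterT_lin VA p c x 0; rewrite !addr0 iterT0 addr0. Qed.

Lemma iterT_sum (k : fieldType) (V : lmodType k) (VA : vertex_algebra V) p
  (I : Type) (r : seq I) (P : pred I) (F : I -> V) :
  iter p (transl VA) (\sum_(i <- r | P i) F i)
  = \sum_(i <- r | P i) iter p (transl VA) (F i).
Proof.
apply: (big_morph _ _ (iterT0 VA p)) => x y.
by have := iterT_lin VA p 1 x y; rewrite !scale1r.
Qed.

Lemma binz0 (k : fieldType) m : binz k m 0 = 1.
Proof. by rewrite /binz big_ord0 divr1. Qed.

Lemma binz1 (k : fieldType) m : binz k m 1 = m%:~R.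
Proof. by rewrite /binz big_ord1 /= subr0 divr1. Qed.

Lemma vacT (k : fieldType) (V : lmodType k) (VA : vertex_algebra V) (m : int) x :
  nprod VA (m - 1) (transl VA x) (vac VA)
  = (1 - m)%:~R *: nprod VA (m - 2) x (vac VA).
Proof.
have [N HN] := borcherds VA (-2) m (-1) x (vac VA) (vac VA).
have H := HN (maxn N 2) (leq_maxl _ _).
have H2 : (2 <= maxn N 2)%N by apply: leq_maxr.
have H1 : (1 <= maxn N 2)%N by rewrite (leq_trans _ H2).
rewrite (sum_tr H2) in H; last first.
  move=> i Hi; rewrite (@vac_right_ge0 _ _ VA (-2 + i%:Z) x) ?np_l0 ?scaler0 //; lia.
rewrite (sum_tr H1) in H; last first.
  move=> i Hi; rewrite !vac_left.
  have -> : (-1 + i%:Z == -1) = false by apply/negbTE; lia.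
  have -> : (-1 + -2 - i%:Z == -1) = false by apply/negbTE; lia.
  by rewrite np_r0 scaler0 subr0 scaler0.
rewrite !big_ord_recr !big_ord0 /= !add0r in H.
rewrite !binz0 binz1 expr0 mul1r !scale1r in H.
rewrite (_ : m - 1 - 0%:Z = m - 1) in H; last by ring.
rewrite (_ : m - 1 - 1%:Z = m - 2) in H; last by ring.
rewrite (_ : m - 2 - 0%:Z = m - 2) in H; last by ring.
rewrite (_ : -2 + 0%:Z = -2) in H; last by ring.
rewrite (_ : -2 + 1%:Z = -1) in H; last by ring.
rewrite (_ : -1 + 0%:Z = -1) in H; last by ring.
rewrite !vac_left eqxx vac_right_m1 in H.
rewrite (_ : (-1 - 2 - 0%:Z == -1) = false) in H; last by [].
rewrite scaler0 subr0 -/(transl VA x) in H.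
by rewrite intrB scalerBl scale1r -{1}H addrK.
Qed.

Lemma natf_nz (k : fieldType) (hk : [pchar k] =i pred0) n : (n.+1%:R : k) != 0.
Proof. by rewrite ((pcharf0P _).1 hk). Qed.

Lemma fact_nz (k : fieldType) (hk : [pchar k] =i pred0) n : (n`!%:R : k) != 0.
Proof. by rewrite ((pcharf0P _).1 hk) -lt0n fact_gt0. Qed.

Lemma vacE (k : fieldType) (hk : [pchar k] =i pred0) (V : lmodType k)
  (VA : vertex_algebra V) p x :
  nprod VA (- (p%:Z) - 1) x (vac VA) = (p`!%:R)^-1 *: iter p (transl VA) x.
Proof.
elim: p x => [|p IH] x.
  by rewrite /= oppr0 add0r vac_right_m1 fact0 invr1 scale1r.
have := vacT VA (- (p%:Z)) x; rewrite IH.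
rewrite (_ : - (p%:Z) - 2 = - (p.+1%:Z) - 1); last by lia.
rewrite (_ : (1 - - p%:Z)%:~R = (p.+1%:R : k)); last first.
  by rewrite (_ : 1 - - p%:Z = p.+1%:Z) //; lia.
move=> E; rewrite -[LHS](scalerK (natf_nz hk p)) -E scalerA.
by rewrite iterSr factS natrM invfM.
Qed.

Lemma prodm1 (k : fieldType) j :
  \prod_(i < j) ((-1 - i%:Z)%:~R : k) = (-1) ^+ j * j`!%:R.
Proof.
elim: j => [|j IH]; first by rewrite big_ord0 expr0 mul1r.
rewrite big_ord_recr /= IH factS natrM exprS.
rewrite (_ : (-1 - j%:Z)%:~R = - (j.+1%:R : k)); last first.
  by rewrite (_ : -1 - j%:Z = - (j.+1%:Z)); [rewrite mulrNz | lia].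
ring.
Qed.

Lemma binzm1 (k : fieldType) (hk : [pchar k] =i pred0) j :
  binz k (-1) j = (-1) ^+ j.
Proof. by rewrite /binz prodm1 mulfK // fact_nz. Qed.

Lemma skew (k : fieldType) (hk : [pchar k] =i pred0) (V : lmodType k)
  (VA : vertex_algebra V) (n : int) a b :
  exists N, forall M, (N <= M)%N ->
  nprod VA n a b + (-1) ^ n *: nprod VA n b a
  = \sum_(j < M) ((-1) ^+ j / (j.+1)`!%:R) *:
       iter j.+1 (transl VA) (nprod VA (n + 1 + j%:Z) a b).
Proof.
have [N HN] := borcherds VA (n + 1) (-1) (-1) a b (vac VA).
exists (maxn N 1) => M HM.
have H := HN M (leq_trans (leq_maxl _ _) HM).
have H1 : (1 <= M)%N by rewrite (leq_trans _ HM) // leq_maxr.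
rewrite [X in _ = X](sum_tr H1) in H; last first.
  move=> i Hi.
  rewrite (@vac_right_ge0 _ _ VA (-1 + i%:Z) b); last by lia.
  rewrite (@vac_right_ge0 _ _ VA (-1 + i%:Z) a); last by lia.
  by rewrite !np_r0 scaler0 subr0 scaler0.
rewrite big_ord1 /= expr0 mul1r binz0 scale1r in H.
rewrite (_ : -1 + (n + 1) - 0%:Z = n) in H; last by ring.
rewrite (_ : -1 + 0%:Z = -1) in H; last by ring.
rewrite !vac_right_m1 expfzDr ?oppr_eq0 ?oner_eq0 // expr1z mulrN1 scaleNr opprK in H.
rewrite -H; apply: eq_bigr => j _.
rewrite binzm1 // (_ : -1 + -1 - j%:Z = - (j.+1%:Z) - 1); last by lia.
by rewrite vacE // scalerA mulrC.
Qed.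

Lemma scale_sum (k : fieldType) (V : lmodType k) (c : k) M (F : 'I_M -> V) :
  c *: \sum_(j < M) F j = \sum_(j < M) c *: F j.
Proof. by rewrite scaler_sumr. Qed.

Lemma fprod_K (k : fieldType) (V : lmodType k) (VA : vertex_algebra V)
  (f : laurent k) a b K :
  (forall i : nat, (K <= i)%N -> vtrunc VA a b <= llow f + i%:Z) ->
  f_product VA f a b
  = \sum_(i < K) lcoef f (llow f + i%:Z) *: nprod VA (llow f + i%:Z) a b.
Proof.
move=> HK; set F := fun i : nat => lcoef f (llow f + i%:Z) *: nprod VA (llow f + i%:Z) a b.
set K0 := `|vtrunc VA a b - llow f|%N.
rewrite /f_product -/K0.
transitivity (\sum_(i < maxn K0 K) F i).
  apply: esym; apply: (@sum_trunc _ K0 (maxn K0 K) F); first exact: leq_maxl.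
  by move=> i Hi; rewrite /F vtruncP ?scaler0 //; lia.
apply: (@sum_trunc _ K (maxn K0 K) F); first exact: leq_maxr.
by move=> i Hi; rewrite /F vtruncP ?scaler0 //; apply: HK.
Qed.

Lemma bound_ex (P : nat -> nat -> Prop) K :
  (forall i, exists N, forall M, (N <= M)%N -> P i M) ->
  exists N, forall i M, (i < K)%N -> (N <= M)%N -> P i M.
Proof.
move=> H; elim: K => [|K [N IH]]; first by exists 0%N.
have [N' HN'] := H K.
exists (maxn N N') => i M; rewrite ltnS leq_eqVlt => /orP [/eqP -> | Hi] HM.
  by apply: HN'; rewrite (leq_trans _ HM) // leq_maxr.
by apply: IH => //; rewrite (leq_trans _ HM) // leq_maxl.
Qed.

Unset Implicit Arguments.

Theorem lemma2p1 (k : fieldType) (hk : [pchar k] =i pred0)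
  (V : lmodType k) (VA : vertex_algebra V) (f : laurent k) (a b : V) :
  exists N : nat, forall M : nat, (N <= M)%N ->
    f_product VA f a b + f_product VA (laurent_neg f) b a
    = \sum_(j < M) (((-1) ^+ j / (j.+1)`!%:R) *:
                     iter j.+1 (transl VA) (f_product VA (laurent_xshift j.+1 f) a b)).
Proof.
set L := llow f.
set K := maxn `|vtrunc VA a b - L|%N `|vtrunc VA b a - L|%N.
have KA : forall i : nat, (K <= i)%N -> vtrunc VA a b <= L + i%:Z by move=> i; lia.
have KB : forall i : nat, (K <= i)%N -> vtrunc VA b a <= L + i%:Z by move=> i; lia.
have [N HN] := @bound_ex (fun i M => nprod VA (L + i%:Z) a b + (-1) ^ (L + i%:Z) *: nprod VA (L + i%:Z) b a
  = \sum_(j < M) ((-1) ^+ j / (j.+1)`!%:R) *: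
       iter j.+1 (transl VA) (nprod VA (L + i%:Z + 1 + j%:Z) a b)) K
  (fun i => skew hk VA (L + i%:Z) a b).
exists N => M HM.
rewrite (@fprod_K _ _ VA f a b K KA) (@fprod_K _ _ VA (laurent_neg f) b a K KB) -big_split.
transitivity (\sum_(i < K) \sum_(j < M) (lcoef f (L + i%:Z) * ((-1) ^+ j / (j.+1)`!%:R)) *:
   iter j.+1 (transl VA) (nprod VA (L + i%:Z + 1 + j%:Z) a b)).
  apply: eq_bigr => i _.
  rewrite /= -/L mulrC -scalerA -scalerDr.
  rewrite (HN i M (ltn_ord i) HM).
  rewrite scale_sum.
  by apply: eq_bigr => j _; rewrite scalerA.
rewrite exchange_big /=; apply: eq_bigr => j _.
rewrite (@fprod_K _ _ VA (laurent_xshift j.+1 f) a b K); last first.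
  by move=> i Hi /=; have := KA i Hi; lia.
rewrite -(iterS j (transl VA)) iterT_sum scaler_sumr; apply: eq_bigr => i _ /=.
rewrite -/L -(iterS j (transl VA) (_ *: _)) iterTZ scalerA [X in X *: _]mulrC.
rewrite (_ : L + j.+1%:Z + i%:Z - j.+1%:Z = L + i%:Z); last by ring.
by rewrite (_ : L + j.+1%:Z + i%:Z = L + i%:Z + 1 + j%:Z); last by lia.
Qed.
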